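(* Let $\mathcal N'$ be the set of pairs of integers $(p,u)$ such that either $p=1$ and $u=0$, or $u=2n\geq 2^m\geq p\geq 2$ for some integers $m,n$. Let $\mathcal N=\mathcal N'\cup\{(p,\infty): p\geq 2 \text{ an integer or } p=\infty\}$. If $F$ is a real field, then $(p(F),u(F))\in\mathcal N$. If in addition $I^k_tF=0$ for some $k\geq 1$, then $p(F)\leq 2^{k-1}$.
   Context: All fields have characteristic $\neq 2$, forms are nondegenerate and finite-dimensional. A field is real if it admits an ordering. $WF$ is the Witt ring, $IF$ its fundamental ideal, $I^kF$ its $k$-th power, $W_tF$ the torsion part of $WF$ (for real $F$, the forms of signature $0$ at every ordering), and $I^k_tF=I^kF\cap W_tF$. The Pythagoras number $p(F)$ is the least integer $p\geq1$ such that every sum of squares in $F$ is a sum of $p$ squares ($\infty$ if none exists). The $u$-invariant $u(F)$ is the supremum of dimensions of anisotropic forms over $F$ whose class lies in $W_tF$ (torsion forms); for nonreal $F$ this is the supremum of dimensions of all anisotropic forms. *)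

(* Defs.v *)
(* Quadratic forms over a field F of characteristic <> 2 are
   represented by diagonalizations <a_1,...,a_n> (seq F); every nondegenerate
   form is isometric to such a diagonal form, and all notions below are
   invariant under isometry. *)
From HB Require Import structures.
From mathcomp Require Import all_boot all_order all_algebra.
From Stdlib Require Import Classical ClassicalEpsilon.
Set Implicit Arguments. Unset Strict Implicit. Unset Printing Implicit Defensive.
Import Order.TTheory GRing.Theory Num.Theory.
Local Open Scope ring_scope.

(* Extended naturals: None stands for infinity. *)
Definition ext_min (P : nat -> Prop) : option nat :=
  match excluded_middle_informative
          (exists n, P n /\ forall m, P m -> (n <= m)%N) with
  | left H => Some (proj1_sig (constructive_indefinite_description _ H))
  | right _ => None
  end.

Definition ext_sup (S : nat -> Prop) : option nat :=
  ext_min (fun b => forall n, S n -> (n <= b)%N).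

Section Forms.
Variable F : fieldType.

Definition is_ordering (P : F -> Prop) : Prop :=
  [/\ (forall x y, P x -> P y -> P (x + y)),
      (forall x y, P x -> P y -> P (x * y)),
      (forall x, P x \/ P (- x)) &
      (forall x, P x -> P (- x) -> x = 0)].

Definition real_field : Prop := exists P, is_ordering P.

Definition sum_of_n_squares (n : nat) (x : F) : Prop :=
  exists l : seq F, size l = n /\ x = \sum_(y <- l) y ^+ 2.
Definition sum_of_squares (x : F) : Prop :=
  exists l : seq F, x = \sum_(y <- l) y ^+ 2.

Definition pythagoras_number : option nat :=
  ext_min (fun p => (1 <= p)%N /\
             forall x, sum_of_squares x -> sum_of_n_squares p x).

Definition qform := seq F.
Definition nondeg (q : qform) : Prop := forall a, a \in q -> a != 0.
Definition dim (q : qform) : nat := size q.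

Definition dmx (n : nat) (q : qform) : 'M[F]_n := diag_mx (\row_(i < n) q`_i).

Definition isometric (q q' : qform) : Prop :=
  size q = size q' /\
  exists P : 'M[F]_(size q), P \in unitmx /\
    P^T *m dmx (size q) q *m P = dmx (size q) q'.

Definition isotropic (q : qform) : Prop :=
  exists x : 'rV[F]_(size q), x != 0 /\
    \sum_(i < size q) q`_i * x 0 i ^+ 2 = 0.
Definition anisotropic (q : qform) : Prop := ~ isotropic q.

(* orthogonal sum is concatenation; m hyperbolic planes *)
Definition hyp (m : nat) : qform := flatten (nseq m [:: 1; -1]).
Definition witt_equiv (q q' : qform) : Prop :=
  exists m1 m2, isometric (q ++ hyp m1) (q' ++ hyp m2).

Definition nmul (n : nat) (q : qform) : qform := flatten (nseq n q).

Definition torsion (q : qform) : Prop :=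
  exists n, (0 < n)%N /\ witt_equiv (nmul n q) [::].

Definition tensor (q q' : qform) : qform := [seq a * b | a <- q, b <- q'].

(* I F = classes of even-dimensional forms; I^k F = finite sums of products
   of k elements of I F. *)
Definition in_Ik (k : nat) (q : qform) : Prop :=
  exists L : seq (seq qform),
    (forall l, l \in L -> size l = k /\
        forall r, r \in l -> nondeg r /\ ~~ odd (size r)) /\
    witt_equiv q (flatten [seq foldr tensor [:: 1] l | l <- L]).

(* I^k_t F = I^k F \cap W_t F = 0 *)
Definition Ikt_zero (k : nat) : Prop :=
  forall q, nondeg q -> in_Ik k q -> torsion q -> witt_equiv q [::].

Definition u_invariant : option nat :=
  ext_sup (fun d => exists q : qform,
             [/\ nondeg q, anisotropic q, torsion q & size q = d]).

End Forms.

Definition in_N (p u : option nat) : Prop :=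
  (p = Some 1%N /\ u = Some 0%N) \/
  (exists m n p', [/\ u = Some (2 * n)%N, p = Some p',
       (2 ^ m <= 2 * n)%N, (p' <= 2 ^ m)%N & (2 <= p')%N]) \/
  (u = None /\ (p = None \/ exists p', p = Some p' /\ (2 <= p')%N)).

(* Main.v *)
Require Import Defs.
From HB Require Import structures.
From mathcomp Require Import all_boot all_order all_algebra.
From Stdlib Require Import Classical ClassicalEpsilon.
Import GRing.Theory.
Set Implicit Arguments. Unset Strict Implicit. Unset Printing Implicit Defensive.
Import Order.TTheory GRing.Theory Num.Theory.
Local Open Scope ring_scope.

Section Real.
Variable F : fieldType.
Variable Pos : F -> Prop.
Hypothesis HP : is_ordering Pos.

Lemma Pos_add x y : Pos x -> Pos y -> Pos (x + y).
Proof. by case: HP => h _ _ _; apply: h. Qed.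
Lemma Pos_mul x y : Pos x -> Pos y -> Pos (x * y).
Proof. by case: HP => _ h _ _; apply: h. Qed.
Lemma Pos_tot x : Pos x \/ Pos (- x).
Proof. by case: HP => _ _ h _; apply: h. Qed.
Lemma Pos_anti x : Pos x -> Pos (- x) -> x = 0.
Proof. by case: HP => _ _ _ h; apply: h. Qed.
Lemma Pos0 : Pos 0.
Proof. by case: (Pos_tot 0); rewrite ?oppr0. Qed.
Lemma Pos_sq x : Pos (x ^+ 2).
Proof.
case: (Pos_tot x) => h; first by rewrite expr2; apply: Pos_mul.
by rewrite -sqrrN expr2; apply: Pos_mul.
Qed.
Lemma Pos_sum (I : Type) (r : seq I) (g : I -> F) :
  (forall i, Pos (g i)) -> Pos (\sum_(i <- r) g i).
Proof.
move=> h; elim: r => [|a r IH]; first by rewrite big_nil; apply: Pos0.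
by rewrite big_cons; apply: Pos_add.
Qed.
Lemma Pos_sum0 (I : eqType) (r : seq I) (g : I -> F) :
  (forall i, Pos (g i)) -> \sum_(i <- r) g i = 0 -> forall i, i \in r -> g i = 0.
Proof.
move=> h; elim: r => [|a r IH] //; rewrite big_cons => e i.
have S0 : \sum_(j <- r) g j = 0.
  apply: Pos_anti; first exact: Pos_sum.
  by have -> : - \sum_(j <- r) g j = g a by apply/eqP; rewrite eq_sym -subr_eq0 opprK e.
rewrite in_cons => /orP [/eqP -> | ir]; last exact: IH.
by move: e; rewrite S0 addr0.
Qed.
Lemma sq_eq0 (x : F) : x ^+ 2 = 0 -> x = 0.
Proof. by move/eqP; rewrite expf_eq0 /= => /eqP. Qed.
Lemma sumsq0 n (f : 'I_n -> F) : \sum_i f i ^+ 2 = 0 -> forall i, f i = 0.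
Proof.
move=> e i; apply: sq_eq0; apply: (Pos_sum0 (r := index_enum _) (g := fun i => f i ^+ 2)) => //.
by move=> j; apply: Pos_sq.
Qed.
Lemma sumsq_seq0 (l : seq F) : \sum_(y <- l) y ^+ 2 = 0 -> forall y, y \in l -> y = 0.
Proof.
move=> e y yl; apply: sq_eq0; apply: (Pos_sum0 (r := l) (g := fun i => i ^+ 2)) => //.
by move=> j; apply: Pos_sq.
Qed.
Lemma Pos_neg1 : ~ Pos (-1).
Proof.
move=> h; have : (1 : F) = 0 by apply: Pos_anti => //; rewrite -[1](expr1n _ 2); apply: Pos_sq.
by move/eqP; rewrite oner_eq0.
Qed.
End Real.

Fixpoint pw k := if k is k'.+1 then (pw k' + pw k')%N else 1%N.
Lemma pwE k : pw k = (2 ^ k)%N.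
Proof. by elim: k => //= k ->; rewrite expnS mul2n addnn. Qed.

Section Pf.
Variable F : fieldType.
Variable Pos : F -> Prop.
Hypothesis HP : is_ordering Pos.

Lemma mmt0 n (B : 'M[F]_n) : B *m B^T = 0 -> B = 0.
Proof.
move=> e; apply/matrixP => i j; rewrite mxE.
have : (B *m B^T) i i = 0 by rewrite e mxE.
rewrite mxE => h.
have h' : \sum_j0 (B i j0) ^+ 2 = 0.
  by rewrite -[RHS]h; apply: eq_bigr => k _; rewrite mxE expr2.
exact: (sumsq0 HP h').
Qed.

Lemma mmtC n (B : 'M[F]_n) b : B *m B^T = b%:M -> B^T *m B = b%:M.
Proof.
have [->|b0] := eqVneq b 0 => e.
  have z0 : (0 : F)%:M = 0 :> 'M_n by apply/matrixP=> i j; rewrite !mxE mul0rn.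
  have e0 : B = 0 by apply: mmt0; rewrite e z0.
  by rewrite e0 trmx0 mulmx0 z0.
have : B *m (b^-1 *: B^T) = 1%:M by rewrite -scalemxAr e scale_scalar_mx mulVf.
move/mulmx1C; rewrite -scalemxAl => /(congr1 (fun M => b *: M)).
by rewrite scalerA mulfV // scale1r scale_scalar_mx mulr1.
Qed.

Lemma pfister k (x : 'rV[F]_(pw k)) :
  exists M : 'M[F]_(pw k), M *m M^T = ((x *m x^T) 0 0)%:M.
Proof.
elim: k x => [|k IH] x /=.
  by exists x; rewrite -mx11_scalar.
have [A hA] := IH (lsubmx x); have [B hB] := IH (rsubmx x).
set a := ((lsubmx x *m (lsubmx x)^T) 0 0) in hA.
set b := ((rsubmx x *m (rsubmx x)^T) 0 0) in hB.
have -> : (x *m x^T) 0 0 = a + b.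
  by rewrite -{1 2}(hsubmxK x) tr_row_mx mul_row_col mxE.
have hB' := mmtC hB.
have [a0|a0] := eqVneq a 0.
  exists (block_mx B 0 0 B); rewrite tr_block_mx !trmx0 mulmx_block.
  by rewrite !mulmx0 !mul0mx !addr0 !add0r hB a0 add0r -scalar_mx_block.
exists (block_mx A B (- (a^-1 *: (A *m B^T *m A))) A).
rewrite tr_block_mx mulmx_block.
have hA' := mmtC hA.
rewrite hA hB raddfN /= linearZ /= !trmx_mul trmxK.
have ur : A *m - (a^-1 *: (A^T *m (B *m A^T))) + B *m A^T = 0.
  rewrite mulmxN -scalemxAr [A *m (A^T *m _)]mulmxA hA mul_scalar_mx scalerA mulVf // scale1r.
  by rewrite addNr.
have dl : - (a^-1 *: (A *m B^T *m A)) *m A^T + A *m B^T = 0.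
  rewrite mulNmx -scalemxAl -[A *m B^T *m A *m A^T]mulmxA hA mul_mx_scalar scalerA mulVf // scale1r.
  by rewrite addNr.
have dr : - (a^-1 *: (A *m B^T *m A)) *m - (a^-1 *: (A^T *m (B *m A^T))) = b%:M.
  rewrite mulNmx mulmxN opprK -scalemxAl -scalemxAr scalerA.
  have -> : A *m B^T *m A *m (A^T *m (B *m A^T)) = (a * (b * a))%:M.
    rewrite -!mulmxA [A *m (A^T *m _)]mulmxA hA mul_scalar_mx -!scalemxAr.
    rewrite [B^T *m (B *m A^T)]mulmxA hB' mul_scalar_mx -!scalemxAr hA.
    by rewrite !scale_scalar_mx.
  rewrite scale_scalar_mx; congr (_%:M).
  by rewrite -mulrA mulKf // [b * a]mulrC mulKf.
rewrite ur dl dr -!raddfD /= [b + a]addrC.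
by rewrite -scalar_mx_block.
Qed.

End Pf.

Section Iso.
Variable F : fieldType.

Definition iso (q q' : seq F) := size q = size q' /\
  exists P : 'M[F]_(size q), P^T *m dmx (size q) q *m P = dmx (size q) q'.

Lemma dmxE n (q : seq F) i j : dmx n q i j = q`_i *+ (i == j).
Proof. by rewrite /dmx !mxE. Qed.

Lemma formE n (q : seq F) (P : 'M[F]_n) i j :
  (P^T *m dmx n q *m P) i j = \sum_(k < n) q`_k * P k i * P k j.
Proof.
rewrite /dmx mul_mx_diag !mxE; apply: eq_bigr => k _; rewrite !mxE.
by rewrite [P k i * _]mulrC.
Qed.

Lemma iso_refl q : iso q q.
Proof. by split=> //; exists 1%:M; rewrite trmx1 mul1mx mulmx1. Qed.

Lemma iso_trans q1 q2 q3 : iso q1 q2 -> iso q2 q3 -> iso q1 q3.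
Proof.
move=> [e1 [P hP]] [e2]; rewrite -e1 => -[Q hQ].
split; first by rewrite e1.
by exists (P *m Q); rewrite trmx_mul !mulmxA -(mulmxA Q^T P^T) -(mulmxA Q^T) hP.
Qed.

Lemma dmx_cat n1 n2 (q1 q2 : seq F) : size q1 = n1 ->
  dmx (n1 + n2) (q1 ++ q2) = block_mx (dmx n1 q1) 0 0 (dmx n2 q2).
Proof.
move=> e; rewrite -[dmx _ (q1 ++ q2)]submxK; congr block_mx;
  apply/matrixP=> i j; rewrite !mxE ?dmxE /= nth_cat e.
- by rewrite ltn_ord.
- rewrite ltn_ord; have /negbTE -> : (lshift n2 i != rshift n1 j).
    by rewrite -val_eqE /= neq_ltn (leq_trans (ltn_ord i) (leq_addr _ _)).
  by rewrite mulr0n.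
- rewrite ltnNge leq_addr /=; have /negbTE -> : (rshift n1 i != lshift n2 j).
    by rewrite -val_eqE /= neq_ltn (leq_trans (ltn_ord j) (leq_addr _ _)) orbT.
  by rewrite mulr0n.
- rewrite ltnNge leq_addr /= addKn.
  by have -> : (rshift n1 i == rshift n1 j) = (i == j) by rewrite -!val_eqE /= eqn_add2l.
Qed.

Lemma iso_cat q1 q1' q2 q2' : iso q1 q1' -> iso q2 q2' -> iso (q1 ++ q2) (q1' ++ q2').
Proof.
move=> [e1 [P hP]] [e2 [Q hQ]]; split; first by rewrite !size_cat e1 e2.
rewrite size_cat; exists (block_mx P 0 0 Q).
rewrite !dmx_cat // -?e1 // tr_block_mx !trmx0 !mulmx_block.
by rewrite !(mulmx0, mul0mx, addr0, add0r) hP hQ.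
Qed.

Lemma iso_perm q q' : perm_eq q' q -> iso q q'.
Proof.
move=> pe; have e : size q = size q' by rewrite (perm_size pe).
case/(perm_iotaP 0): pe => Is pI qE.
have Ilt : forall i : 'I_(size q), (nth 0%N Is i < size q)%N.
  move=> i; have : nth 0%N Is i \in Is by rewrite mem_nth // (perm_size pI) size_iota.
  by rewrite (perm_mem pI) mem_iota.
have uI : uniq Is by rewrite (perm_uniq pI) iota_uniq.
split=> //; exists (\matrix_(k, i) ((k == Ordinal (Ilt i))%:R)).
apply/matrixP=> i j; rewrite formE dmxE.
rewrite (bigD1 (Ordinal (Ilt i))) //= big1 => [|k /negbTE kn]; last by rewrite !mxE kn !mulr0 mul0r.
rewrite !mxE eqxx addr0 mulr1 qE (nth_map 0%N); last by rewrite (perm_size pI) size_iota.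
have -> : (Ordinal (Ilt i) == Ordinal (Ilt j)) = (i == j).
  rewrite eqE /=; apply/eqP/eqP => [h|->//]; apply/val_inj.
  have sz : size Is = size q by rewrite (perm_size pI) size_iota.
  by apply/eqP; rewrite -(nth_uniq 0%N _ _ uI) ?h ?sz ?ltn_ord.
by rewrite mulr_natr.
Qed.

Lemma iso_isometric q q' : iso q q' -> nondeg q' -> isometric q q'.
Proof.
move=> [e [P hP]] nd; split=> //; exists P; split=> //.
rewrite unitmxE unitfE.
have : \det (P^T *m dmx (size q) q *m P) != 0.
  rewrite hP /dmx det_diag; apply/prodf_neq0 => i _; rewrite mxE.
  by apply: nd; rewrite mem_nth // -e.
by rewrite !det_mulmx; apply: contraNneq => ->; rewrite mulr0.
Qed.
End Iso.

Section SOS.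
Variable F : fieldType.
Variable Pos : F -> Prop.
Hypothesis HP : is_ordering Pos.

Lemma sos_vec n (x : F) : sum_of_n_squares n x -> exists v : 'rV[F]_n, x = (v *m v^T) 0 0.
Proof.
case=> l [<- ->]; exists (\row_(i < size l) l`_i); rewrite mxE (big_nth 0) big_mkord.
by apply: eq_bigr => i _; rewrite !mxE expr2.
Qed.

Lemma vec_sos n (v : 'rV[F]_n) : sum_of_n_squares n ((v *m v^T) 0 0).
Proof.
exists [seq v 0 i | i <- enum 'I_n]; rewrite size_map size_enum_ord; split=> //.
rewrite big_map big_enum /= mxE; apply: eq_bigr => i _; by rewrite !mxE expr2.
Qed.

Lemma sos_pad n m (x : F) : (n <= m)%N -> sum_of_n_squares n x -> sum_of_n_squares m x.
Proof.
move=> nm [l [sl ->]]; exists (l ++ nseq (m - n) 0); rewrite size_cat size_nseq sl subnKC //.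
split=> //; rewrite big_cat /= big_nseq expr0n /=.
suff -> : iter (m - n) (+%R 0) (0 : F) = 0 by rewrite addr0.
by elim: (m - n)%N => //= k ->; rewrite addr0.
Qed.

Lemma sos_mul k (s t : F) : sum_of_n_squares (pw k) s -> sum_of_n_squares (pw k) t ->
  sum_of_n_squares (pw k) (s * t).
Proof.
move=> /sos_vec [x ->] /sos_vec [y ->].
have [M hM] := pfister HP x.
suff -> : (x *m x^T) 0 0 * (y *m y^T) 0 0 = ((y *m M) *m (y *m M)^T) 0 0 by apply: vec_sos.
rewrite trmx_mul !mulmxA -(mulmxA y M) hM mul_mx_scalar -scalemxAl.
by rewrite [in RHS]mxE.
Qed.

Lemma sos_any (x : F) : sum_of_squares x -> exists n, sum_of_n_squares n x.
Proof. by case=> l ->; exists (size l), l. Qed.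

Lemma sos_is (n : nat) (x : F) : sum_of_n_squares n x -> sum_of_squares x.
Proof. by case=> l [_ ->]; exists l. Qed.

Lemma sos_nonneg n (x : F) : sum_of_n_squares n x -> Pos x.
Proof. case=> l [_ ->]; apply: (Pos_sum HP) => y; exact: Pos_sq HP y. Qed.

End SOS.

Section PF.
Variable F : fieldType.
Variable Pos : F -> Prop.
Hypothesis HP : is_ordering Pos.

Definition pf N (a : F) := nseq N 1 ++ nseq N (- a).

Lemma dmx_nseq n (c : F) : dmx n (nseq n c) = c%:M.
Proof. by apply/matrixP=> i j; rewrite dmxE !mxE nth_nseq ltn_ord. Qed.

Lemma iso_nseq_neg k (a : F) : a != 0 -> sum_of_n_squares (pw k) a ->
  iso (nseq (pw k) (- a)) (nseq (pw k) (-1)).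
Proof.
move=> a0 /(sos_vec) [x ax]; have [M hM] := pfister HP x; rewrite -ax in hM.
split; first by rewrite !size_nseq.
rewrite size_nseq; exists (a^-1 *: M); rewrite !dmx_nseq.
rewrite linearZ /= linearZ /= -!scalemxAl mul_mx_scalar -scalemxAl (mmtC HP hM).
by rewrite !scale_scalar_mx mulNr !mulrN mulKf // mulVf.
Qed.

Lemma count_nmul (p : pred F) c (q : seq F) : count p (nmul c q) = (c * count p q)%N.
Proof. by rewrite /nmul count_flatten map_nseq sumn_nseq mulnC. Qed.

Lemma perm_nmul_pf c N (a : F) : perm_eq (nmul c (pf N a)) (pf (c * N) a).
Proof.
apply/permP => p; rewrite count_nmul /pf !count_cat !count_nseq.
by rewrite mulnDr !mulnA [(c * _)%N]mulnC [(c * p (- a))%N]mulnC.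
Qed.

Lemma perm_hyp K : perm_eq (hyp F K) (nseq K 1 ++ nseq K (-1)).
Proof.
apply/permP => p; rewrite /hyp count_flatten map_nseq sumn_nseq count_cat !count_nseq /=.
by rewrite addn0 mulnDl.
Qed.

Lemma nondeg_hyp K : nondeg (hyp F K).
Proof.
move=> x; rewrite (perm_mem (perm_hyp K)) mem_cat => /orP [] /nseqP [-> _].
  exact: oner_neq0.
by rewrite oppr_eq0 oner_neq0.
Qed.

Lemma pf_torsion j (a : F) : a != 0 -> sum_of_squares a -> torsion (pf (pw j) a).
Proof.
move=> a0 /sos_any [L hL].
exists (pw L); split; first by rewrite pwE expn_gt0.
have e : (pw L * pw j)%N = pw (L + j) by rewrite !pwE expnD.
have hK : sum_of_n_squares (pw (L + j)) a.
  apply: sos_pad hL; rewrite pwE; apply: leq_trans (ltnW (ltn_expl _ (leqnn 2))) _.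
  by rewrite leq_exp2l // leq_addr.
exists 0%N, (pw (L + j)); rewrite /= cats0; apply: iso_isometric; last exact: nondeg_hyp.
apply: (iso_trans (q2 := pf (pw L * pw j) a)).
  by apply: iso_perm; rewrite perm_sym perm_nmul_pf.
rewrite e; apply: (iso_trans (q2 := nseq (pw (L + j)) 1 ++ nseq (pw (L + j)) (-1))).
  exact: iso_cat (iso_refl _) (iso_nseq_neg a0 hK).
by apply: iso_perm; apply: perm_hyp.
Qed.

Lemma pf_nondeg N (a : F) : a != 0 -> nondeg (pf N a).
Proof.
move=> a0 x; rewrite mem_cat => /orP [] /nseqP [-> _]; first exact: oner_neq0.
by rewrite oppr_eq0.
Qed.

Lemma pf_size N (a : F) : size (pf N a) = (N + N)%N.
Proof. by rewrite size_cat !size_nseq. Qed.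

Lemma pf_aniso j (a : F) : ~ sum_of_n_squares (pw j) a -> anisotropic (pf (pw j) a).
Proof.
move=> na [x [x0]]; move: x x0; rewrite pf_size => x x0.
rewrite big_split_ord /=.
set s := \sum_(i < pw j) _; set t := \sum_(i < pw j) _.
have es : s = \sum_(i < pw j) x 0 (lshift (pw j) i) ^+ 2.
  by apply: eq_bigr => i _; rewrite /pf nth_cat size_nseq /= ltn_ord nth_nseq ltn_ord mul1r.
have et : t = - a * \sum_(i < pw j) x 0 (rshift (pw j) i) ^+ 2.
  rewrite mulr_sumr; apply: eq_bigr => i _.
  by rewrite /pf nth_cat size_nseq /= ltnNge leq_addr /= addKn nth_nseq ltn_ord.
set S := \sum_(i < pw j) x 0 (lshift _ i) ^+ 2 in es.
set T := \sum_(i < pw j) x 0 (rshift _ i) ^+ 2 in et.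
rewrite es et mulNr => e.
have [T0|T0] := eqVneq T 0.
  move: e; rewrite T0 mulr0 subr0 => S0.
  apply/negP: x0; rewrite negbK; apply/eqP/matrixP => i k.
  rewrite [i]ord1 mxE; case: (split_ordP k) => l ->.
    exact: (sumsq0 HP S0).
  exact: (sumsq0 HP T0).
apply: na.
have sS : sum_of_n_squares (pw j) S.
  exists [seq x 0 (lshift (pw j) i) | i <- enum 'I_(pw j)].
  by rewrite size_map size_enum_ord big_map big_enum.
have sT : sum_of_n_squares (pw j) T.
  exists [seq x 0 (rshift (pw j) i) | i <- enum 'I_(pw j)].
  by rewrite size_map size_enum_ord big_map big_enum.
have aE : a = (S * T) * (T^-1) ^+ 2.
  have : S = a * T by apply/eqP; rewrite -subr_eq0 e.
  by move=> ->; rewrite expr2 mulrA !mulfK.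
case: (sos_mul HP sS sT) => l [sl eST].
exists [seq y * T^-1 | y <- l]; rewrite size_map; split=> //.
rewrite aE eST big_map mulr_suml; apply: eq_bigr => y _.
by rewrite exprMn.
Qed.
End PF.

Section Witt.
Variable F : fieldType.
Hypothesis char2 : (2%:R : F) != 0.
Variables (s m1 : nat) (Dq : 'M[F]_s).
Hypothesis aniso : forall x : 'rV[F]_s, x *m Dq *m x^T = 0 -> x = 0.

Local Notation N := (s + (m1 + m1))%N.
Definition Dw : 'M[F]_N := block_mx Dq 0 0 (block_mx 1%:M 0 0 (- 1%:M)).

Lemma bil r1 r2 (A : 'M[F]_(r1, N)) (B : 'M[F]_(r2, N)) :
  A *m Dw *m B^T = lsubmx A *m Dq *m (lsubmx B)^T
    + lsubmx (rsubmx A) *m (lsubmx (rsubmx B))^T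
    - rsubmx (rsubmx A) *m (rsubmx (rsubmx B))^T.
Proof.
rewrite -{1}(hsubmxK A) -{1}(hsubmxK (rsubmx A)) -{1}(hsubmxK B) -{1}(hsubmxK (rsubmx B)).
rewrite /Dw !tr_row_mx (mul_row_block (lsubmx A)) !mulmx0 !addr0 add0r.
rewrite (mul_row_block (lsubmx (rsubmx A))) !mulmx0 !addr0 add0r mulmx1 mulmxN mulmx1.
rewrite (mul_row_col (lsubmx A *m Dq)) (mul_row_col (lsubmx (rsubmx A))).
by rewrite mulNmx addrA.
Qed.

Lemma witt_core r (W : 'M[F]_(r, N)) : W *m Dw *m W^T = 0 -> row_free W -> (r <= m1)%N.
Proof.
move=> iso free.
set Bm : 'M[F]_(N, m1) := col_mx 0 (col_mx 1%:M (- 1%:M)).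
set Am : 'M[F]_(N, m1) := col_mx 0 (col_mx 1%:M 1%:M).
have WB : forall r' (Z : 'M[F]_(r', N)), Z *m Bm = lsubmx (rsubmx Z) - rsubmx (rsubmx Z).
  move=> r' Z; rewrite -{1}(hsubmxK Z) -{1}(hsubmxK (rsubmx Z)) /Bm.
  by rewrite !mul_row_col mulmx0 add0r mulmx1 mulmxN mulmx1.
have WA : forall r' (Z : 'M[F]_(r', N)), Z *m Am = lsubmx (rsubmx Z) + rsubmx (rsubmx Z).
  move=> r' Z; rewrite -{1}(hsubmxK Z) -{1}(hsubmxK (rsubmx Z)) /Am.
  by rewrite !mul_row_col mulmx0 add0r !mulmx1.
set G := W *m Bm.
set K := kermx G.
set KW := K *m W.
have KWB : KW *m Bm = 0 by rewrite /KW -mulmxA mulmx_ker.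
set Z := lsubmx (rsubmx KW).
have Zn : rsubmx (rsubmx KW) = Z.
  by apply/eqP; rewrite eq_sym -subr_eq0 -WB KWB.
have KWiso : KW *m Dw *m KW^T = 0.
  by rewrite /KW trmx_mul !mulmxA -(mulmxA K W) -(mulmxA K) iso !(mulmx0, mul0mx).
have Zq : lsubmx KW = 0.
  move: KWiso; rewrite bil Zn addrK => h.
  apply/row_matrixP => i; rewrite row0 rowE; apply: aniso.
  by rewrite trmx_mul !mulmxA -(mulmxA _ (lsubmx KW)) -(mulmxA _ (lsubmx KW *m Dq)) h !(mulmx0, mul0mx).
have KWE : KW = row_mx 0 (row_mx Z Z) by rewrite -Zq -{2}Zn /Z !hsubmxK.
have XY : (KW *m Am) *m G^T = 0.
  have h1 : KW *m Dw *m W^T = 0 by rewrite /KW -(mulmxA K W Dw) -(mulmxA K) iso mulmx0.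
  move: h1; rewrite bil Zq !mul0mx add0r Zn => h1.
  have h2 : Z *m (W *m Bm)^T = 0 by rewrite WB linearB /= mulmxBr.
  by rewrite /G WA Zn mulmxDl h2 addr0.
have rX : \rank (KW *m Am) = \rank K.
  rewrite /KW -mulmxA -(mxrank_mul_ker K (W *m Am)).
  suff -> : (K :&: kermx (W *m Am))%MS = 0 by rewrite mxrank0 addn0.
  set C := (K :&: kermx (W *m Am))%MS.
  have /submxP [C' eC] : (C <= K)%MS by apply: capmxSl.
  have : (C <= kermx (W *m Am))%MS by apply: capmxSr.
  rewrite sub_kermx eC => /eqP.
  rewrite mulmxA -(mulmxA C' K W) -/KW -mulmxA WA Zn mulmxDr -mulr2n -scaler_nat => /eqP.
  rewrite scalemx_eq0 (negbTE char2) /= => /eqP CZ.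
  apply/eqP; rewrite -(mulmx_free_eq0 _ free) -mulmxA -/KW KWE.
  by rewrite !mul_mx_row CZ mulmx0 !row_mx0.
have : (KW *m Am <= kermx G^T)%MS by rewrite sub_kermx XY.
move/mxrankS; rewrite rX mxrank_ker mxrank_tr /K mxrank_ker => h.
have := rank_leq_row G; have := rank_leq_col G.
move: h; set g := \rank G => h gm gr.
by rewrite -(subnK gr) -(leq_add2r g) in h; rewrite -[r](subnK gr) (leq_trans _ (leq_trans h _)) ?subnK.
Qed.
End Witt.

Section F1.
Variable F : fieldType.
Hypothesis char2 : (2%:R : F) != 0.

Lemma hypU m2 n (e : n = (m2 + m2)%N) : exists U : 'M[F]_(m2, n),
  U *m dmx n (nseq m2 (1 : F) ++ nseq m2 (-1)) *m U^T = 0 /\ row_free U.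
Proof.
subst n; exists (row_mx 1%:M 1%:M); split.
  rewrite dmx_cat ?size_nseq // !dmx_nseq tr_row_mx trmx1 (mul_row_block 1%:M).
  rewrite !mulmx0 !mul1mx addr0 add0r (mul_row_col 1%:M) !mulmx1.
  by apply/matrixP=> i j; rewrite !mxE -mulrnDl addrN mul0rn.
by apply/row_freeP; exists (col_mx 1%:M 0); rewrite (mul_row_col 1%:M) mulmx0 addr0 mulmx1.
Qed.

Lemma aniso_mx (q : seq F) : anisotropic q ->
  forall x : 'rV[F]_(size q), x *m dmx (size q) q *m x^T = 0 -> x = 0.
Proof.
move=> an x h; case: (eqVneq x 0) => // x0; exfalso; apply: an; exists x; split=> //.
move/matrixP: h => /(_ 0 0); rewrite !mxE => h; rewrite -[RHS]h.
apply: eq_bigr => i _; rewrite !mxE (bigD1 i) //= big1 => [|k /negbTE ki].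
  by rewrite (dmxE q i i) eqxx mulr1n addr0 expr2 mulrCA mulrA.
by rewrite (dmxE q k i) ki mulr0n mulr0.
Qed.

Lemma F1 (q : seq F) m1 m2 : anisotropic q ->
  isometric (q ++ hyp F m1) (hyp F m2) -> size q = 0%N.
Proof.
move=> an [e [P [Pu hP]]].
have I1 : iso (q ++ (nseq m1 1 ++ nseq m1 (-1))) (nseq m2 1 ++ nseq m2 (-1)).
  apply: (iso_trans (q2 := q ++ hyp F m1)).
    by apply: iso_cat (iso_refl _) (iso_perm (perm_hyp _ _)).
  apply: (iso_trans (q2 := hyp F m2)); first by split=> //; exists P.
  by apply: iso_perm; rewrite perm_sym perm_hyp.
case: I1; rewrite !size_cat !size_nseq => e2 [Q hQ].
have Qu : Q \in unitmx.
  rewrite unitmxE unitfE.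
  have : \det (Q^T *m dmx (size q + (m1 + m1)) (q ++ nseq m1 1 ++ nseq m1 (-1)) *m Q) != 0.
    rewrite hQ /dmx det_diag; apply/prodf_neq0 => i _; rewrite mxE.
    have nT : nondeg (nseq m2 (1 : F) ++ nseq m2 (-1)).
      move=> y; rewrite mem_cat => /orP [] /nseqP [-> _]; first exact: oner_neq0.
      by rewrite oppr_eq0 oner_neq0.
    by apply: nT; apply: mem_nth; rewrite size_cat !size_nseq -e2.
  by rewrite !det_mulmx; apply: contraNneq => ->; rewrite mulr0.
have [U [hU fU]] := hypU e2.
have Dd : dmx (size q + (m1 + m1)) (q ++ nseq m1 1 ++ nseq m1 (-1)) = Dw m1 (dmx (size q) q).
  by rewrite dmx_cat // dmx_cat ?size_nseq // !dmx_nseq /Dw raddfN.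
rewrite Dd in hQ.
have W := witt_core char2 (m1 := m1) (aniso_mx an) (W := U *m Q^T).
have : (m2 <= m1)%N.
  apply: W.
    by rewrite trmx_mul trmxK !mulmxA -(mulmxA U) -(mulmxA U) hQ.
  by rewrite /row_free mxrankMfree ?row_free_unit ?unitmx_tr //; apply: fU.
move=> le; apply/eqP; rewrite -(eqn_add2r (m1 + m1)) add0n e2.
by rewrite eqn_leq leq_add //= -e2 leq_addl.
Qed.
End F1.

Section Syl.
Variable F : fieldType.
Variable Pos : F -> Prop.
Hypothesis HP : is_ordering Pos.

Definition posb (x : F) : bool :=
  if excluded_middle_informative (Pos x /\ x <> 0) then true else false.
Lemma posbP x : reflect (Pos x /\ x <> 0) (posb x).
Proof. by rewrite /posb; case: excluded_middle_informative => h; constructor. Qed.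

Lemma card_count n (d : seq F) (p : pred F) : size d = n ->
  #|[set i : 'I_n | p d`_i]| = count p d.
Proof.
move=> <-; rewrite -sum1_card -sum1_count (big_nth 0) big_mkord.
by apply: eq_bigl => i; rewrite inE.
Qed.

Definition selm n r (s : 'I_r -> 'I_n) : 'M[F]_(r, n) := \matrix_(t, k) ((s t == k)%:R).

Lemma selm_form n r (s : 'I_r -> 'I_n) (d : seq F) : injective s ->
  selm s *m dmx n d *m (selm s)^T = diag_mx (\row_t d`_(s t)).
Proof.
move=> si; apply/matrixP => t t'; rewrite /dmx mul_mx_diag !mxE.
rewrite (bigD1 (s t)) //= big1 => [|k /negbTE kn]; last first.
  by rewrite !mxE eq_sym kn !mul0r.
rewrite !mxE eqxx mul1r addr0.
have -> : (s t' == s t) = (t == t') by rewrite eq_sym; apply/eqP/eqP => [/si|->].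
by case: (t == t'); rewrite ?mulr1 ?mulr0.
Qed.

Lemma selm_free n r (s : 'I_r -> 'I_n) : injective s -> row_free (selm s).
Proof.
move=> si; apply/row_freeP; exists (selm s)^T.
have := selm_form (nseq n 1) si; rewrite /dmx.
have -> : diag_mx (\row_(i < n) (nseq n (1 : F))`_i) = 1%:M.
  by apply/matrixP => i j; rewrite !mxE nth_nseq ltn_ord.
rewrite mulmx1 => ->; apply/matrixP => i j; rewrite !mxE nth_nseq ltn_ord.
by [].
Qed.

Lemma diag_val r (w : 'rV[F]_r) (y : 'rV[F]_r) :
  (y *m diag_mx w *m y^T) 0 0 = \sum_t w 0 t * y 0 t ^+ 2.
Proof.
rewrite mul_mx_diag !mxE; apply: eq_bigr => t _; rewrite !mxE.
by rewrite mulrC mulrA expr2 mulrC !mulrA.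
Qed.

Lemma val_pos r (w : 'rV[F]_r) (y : 'rV[F]_r) :
  (forall t, Pos (w 0 t) /\ w 0 t <> 0) -> y != 0 ->
  Pos (\sum_t w 0 t * y 0 t ^+ 2) /\ \sum_t w 0 t * y 0 t ^+ 2 <> 0.
Proof.
move=> hw y0; split.
  by apply: (Pos_sum HP) => t; apply: (Pos_mul HP); [case: (hw t)|apply: (Pos_sq HP)].
move=> e; move/eqP: y0; apply; apply/matrixP => i t; rewrite [i]ord1 mxE.
have := Pos_sum0 HP (r := index_enum _) (g := fun t => w 0 t * y 0 t ^+ 2).
move=> /(_ _ e t) h.
have /h : forall t, Pos (w 0 t * y 0 t ^+ 2).
  by move=> t'; apply: (Pos_mul HP); [case: (hw t')|apply: (Pos_sq HP)].
rewrite mem_index_enum => /(_ isT) /eqP; rewrite mulf_eq0 => /orP [/eqP|/eqP] //.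
  by case: (hw t).
by move/sq_eq0.
Qed.

Lemma val_neg r (w : 'rV[F]_r) (y : 'rV[F]_r) :
  (forall t, Pos (- w 0 t)) -> Pos (- \sum_t w 0 t * y 0 t ^+ 2).
Proof.
move=> hw; rewrite -sumrN; apply: (Pos_sum HP) => t; rewrite -mulNr.
by apply: (Pos_mul HP) => //; apply: (Pos_sq HP).
Qed.

Lemma triple m r n (X : 'M[F]_(m, r)) (Y : 'M[F]_(r, n)) (D : 'M[F]_n) :
  (X *m Y) *m D *m (X *m Y)^T = X *m (Y *m D *m Y^T) *m X^T.
Proof. by rewrite trmx_mul !mulmxA. Qed.

Lemma sylv n (d d' : seq F) (P : 'M[F]_n) : P \in unitmx ->
  P^T *m dmx n d *m P = dmx n d' -> size d = n -> size d' = n ->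
  (count posb d' <= count posb d)%N.
Proof.
move=> Pu hP sd sd'; rewrite leqNgt; apply/negP => lt.
set A' := [set i : 'I_n | posb d'`_i].
set An := [set i : 'I_n | ~~ posb d`_i].
have cA' : #|A'| = count posb d' by rewrite card_count.
have cAn : #|An| = (n - count posb d)%N.
  have := @card_count n d (predC posb) sd; rewrite /= => ->.
  by rewrite -sd -(count_predC posb d) addKn.
set E' := selm (@enum_val _ (mem A')).
set En := selm (@enum_val _ (mem An)).
set S := E' *m P^T.
have rS : \rank S = #|A'|.
  rewrite /S mxrankMfree; last by rewrite row_free_unit unitmx_tr.
  by have := selm_free (@enum_val_inj _ (mem A')); rewrite /row_free => /eqP.
have rN : \rank En = #|An|.
  by have := selm_free (@enum_val_inj _ (mem An)); rewrite /row_free => /eqP.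
have rC : (0 < \rank (S :&: En))%N.
  have := mxrank_sum_cap S En; rewrite rS rN => h.
  have h2 := rank_leq_col (S + En)%MS.
  have h3 : (count posb d <= n)%N by rewrite -sd count_size.
  rewrite lt0n; apply/eqP => h0; move: h; rewrite h0 addn0 => h.
  have : (#|A'| + #|An| <= n)%N by rewrite -h.
  rewrite cA' cAn => h4.
  move: lt; rewrite ltnNge; move/negP; apply.
  by rewrite -(leq_add2r (n - count posb d)) subnKC.
have [i vi] : exists i, row i (S :&: En)%MS != 0.
  have : [exists i, row i (S :&: En)%MS != 0].
    apply: contraTT rC; rewrite negb_exists => /forallP h.
    rewrite -eqn0Ngt mxrank_eq0; apply/eqP/row_matrixP => i; rewrite row0.
    by apply/eqP; move: (h i); rewrite negbK.
  by case/existsP => i hi; exists i.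
set v := row i (S :&: En)%MS in vi.
have vS : (v <= S)%MS by apply: submx_trans (row_sub _ _) (capmxSl _ _).
have vN : (v <= En)%MS by apply: submx_trans (row_sub _ _) (capmxSr _ _).
move/submxP: vS => [c ec]; move/submxP: vN => [g eg].
set V := (v *m dmx n d *m v^T) 0 0.
have V1 : Pos V /\ V <> 0.
  have -> : V = (c *m (E' *m dmx n d' *m E'^T) *m c^T) 0 0.
    by rewrite /V ec /S triple triple trmxK hP.
  rewrite selm_form; last exact: enum_val_inj.
  rewrite diag_val; apply: val_pos.
    move=> t; rewrite mxE; have := enum_valP t; rewrite inE => /posbP.
    by [].
  by apply: contraNneq vi => c0; rewrite -/v ec c0 !mul0mx.
have V2 : Pos (- V).
  rewrite /V eg triple selm_form; last exact: enum_val_inj.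
  rewrite diag_val; apply: val_neg => t; rewrite mxE.
  have := enum_valP t; rewrite inE => /posbP h.
  case: (Pos_tot HP (d`_(enum_val t))) => // hp.
  have [z|z] := eqVneq (d`_(enum_val t)) 0; first by rewrite z oppr0; apply: (Pos0 HP).
  by exfalso; apply: h; split=> //; apply/eqP.
by case: V1 => p1 p2; apply: p2; apply: (Pos_anti HP).
Qed.
End Syl.

Section Even.
Variable F : fieldType.
Variable Pos : F -> Prop.
Hypothesis HP : is_ordering Pos.

Lemma sylv_eq (q q' : seq F) : isometric q q' -> count (posb Pos) q = count (posb Pos) q'.
Proof.
move=> [e [P [Pu hP]]]; apply/eqP; rewrite eqn_leq; apply/andP; split; last first.
  exact: (sylv HP Pu hP erefl (esym e)).
apply: (sylv HP (P := invmx P)); rewrite ?unitmx_inv // -?e //.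
rewrite trmx_inv -hP !mulmxA mulVmx ?unitmx_tr // mul1mx -mulmxA mulmxV //.
by rewrite mulmx1.
Qed.

Lemma posb1 : posb Pos 1.
Proof. apply/posbP; split; last by apply/eqP; exact: oner_neq0.
by rewrite -[1](expr1n _ 2); apply: (Pos_sq HP). Qed.

Lemma posbN1 : posb Pos (-1) = false.
Proof. by apply/posbP => -[h _]; apply: (Pos_neg1 HP). Qed.

Lemma count_hyp m : count (posb Pos) (hyp F m) = m.
Proof. by rewrite (permP (perm_hyp F m)) count_cat !count_nseq posb1 posbN1 mul1n mul0n addn0. Qed.

Lemma size_hyp m : size (hyp F m) = (m + m)%N.
Proof. by rewrite (perm_size (perm_hyp F m)) size_cat !size_nseq. Qed.

Lemma size_nmul c (q : seq F) : size (nmul c q) = (c * size q)%N.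
Proof. by rewrite -!count_predT count_nmul. Qed.

Lemma torsion_even (q : seq F) : torsion q -> ~~ odd (size q).
Proof.
move=> [n [n0 [m1 [m2 h]]]].
have c := sylv_eq h; have [e _] := h.
move: c e; rewrite /= count_cat count_nmul !count_hyp size_cat size_nmul !size_hyp => c e.
set cq := count _ q in c.
have : (n * size q = n * (cq + cq))%N.
  apply/eqP; rewrite -(eqn_add2r (m1 + m1)) e -c mulnDr.
  by rewrite addnACA.
move/eqP; rewrite eqn_pmul2l // => /eqP ->.
by rewrite addnn odd_double.
Qed.
End Even.

Section Pyth.
Variable F : fieldType.
Variable Pos : F -> Prop.
Hypothesis HP : is_ordering Pos.

Definition fval (q : seq F) (x : nat -> F) := \sum_(i < size q) q`_i * x i ^+ 2.

Lemma iso_fun (q : seq F) : isotropic q ->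
  exists x : nat -> F, (exists i, (i < size q)%N /\ x i <> 0) /\ fval q x = 0.
Proof.
case=> xr [x0 e].
exists (fun i => if insub i is Some o then xr 0 o else 0); split.
  have : [exists j, xr 0 j != 0].
    apply: contraNT x0; rewrite negb_exists => /forallP h.
    apply/eqP/matrixP => i j; rewrite [i]ord1 mxE; apply/eqP; move: (h j); rewrite negbK.
    by [].
  case/existsP => j hj; exists (val j); split; first exact: ltn_ord.
  by rewrite valK; apply/eqP.
rewrite -[RHS]e; apply: eq_bigr => i _; by rewrite valK.
Qed.

Lemma fun_iso (q : seq F) (x : nat -> F) :
  (exists i, (i < size q)%N /\ x i <> 0) -> fval q x = 0 -> isotropic q.
Proof.
move=> [i [iq xi]] e; exists (\row_(j < size q) x j); split.
  apply/negP => /eqP /matrixP /(_ 0 (Ordinal iq)); rewrite !mxE => h.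
  exact: xi.
by rewrite -[RHS]e; apply: eq_bigr => j _; rewrite mxE.
Qed.

Lemma fval_cat (q r : seq F) x :
  fval (q ++ r) x = fval q x + fval r (fun i => x (size q + i)%N).
Proof.
rewrite /fval size_cat big_split_ord /=; congr (_ + _); apply: eq_bigr => i _.
  by rewrite nth_cat ltn_ord.
by rewrite nth_cat ltnNge leq_addr /= addKn.
Qed.

Lemma sos_Pos (x : F) : sum_of_squares x -> Pos x.
Proof. case=> l ->; apply: (Pos_sum HP) => y; exact: (Pos_sq HP). Qed.

Lemma nmul_val (q : seq F) n (x : nat -> F) : exists w : nat -> F,
  [/\ forall j, sum_of_squares (w j),
      fval (nmul n q) x = \sum_(j < size q) q`_j * w j &
      (forall j, (j < size q)%N -> w j = 0) -> forall i, (i < n * size q)%N -> x i = 0].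
Proof.
elim: n x => [|n IH] x.
  exists (fun _ => 0); split.
  - by move=> j; exists [::]; rewrite big_nil.
  - by rewrite /fval /nmul /= big_ord0 big1 // => j _; rewrite mulr0.
  - by [].
have [w' [s' v' z']] := IH (fun i => x (size q + i)%N).
exists (fun j => x j ^+ 2 + w' j); split.
- move=> j; case: (s' j) => l ->; exists (x j :: l); by rewrite big_cons.
- rewrite /nmul /= fval_cat -/(nmul n q) v' /fval -big_split /=.
  by apply: eq_bigr => j _; rewrite mulrDr.
- move=> h i lt.
  have hz : forall j, (j < size q)%N -> x j = 0 /\ w' j = 0.
    move=> j jq; have := h j jq => e.
    have p1 := Pos_sq HP (x j); have p2 := sos_Pos (s' j).
    have a1 : x j ^+ 2 = 0.
      apply: (Pos_anti HP) => //.
      by have -> : - x j ^+ 2 = w' j by apply/eqP; rewrite eq_sym -subr_eq0 opprK addrC e.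
    by split; [exact: sq_eq0 a1 | move: e; rewrite a1 add0r].
  case: (ltnP i (size q)) => iq; first by case: (hz i iq).
  have := z' (fun j jq => proj2 (hz j jq)) (i - size q)%N.
  rewrite subnKC // => -> //.
  by rewrite ltn_subLR // -mulSn.
Qed.

Lemma pyth_nmul (q : seq F) n :
  (forall x : F, sum_of_squares x -> sum_of_n_squares 1 x) ->
  anisotropic q -> anisotropic (nmul n q).
Proof.
move=> pyt an /iso_fun [x [[i [ilt xi]] e]].
have [w [sw vw zw]] := nmul_val q n x.
have sq1 : forall j, exists z, w j = z ^+ 2.
  move=> j; case: (pyt _ (sw j)) => l [sl ->].
  case: l sl => [|z [|]] //= _; exists z; by rewrite big_cons big_nil addr0.
pose y j := proj1_sig (constructive_indefinite_description _ (sq1 j)).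
have hy : forall j, w j = y j ^+ 2.
  by move=> j; rewrite /y; case: constructive_indefinite_description.
apply: an; apply: (fun_iso (x := y)).
  apply: NNPP => hn; apply: xi; apply: zw => [j jq|]; last first.
    by move: ilt; rewrite /nmul size_flatten /shape map_nseq sumn_nseq mulnC.
  rewrite hy; apply/eqP; rewrite expf_eq0 /=; apply/eqP.
  by apply: NNPP => yj; apply: hn; exists j.
by rewrite /fval -[RHS]e vw; apply: eq_bigr => j _; rewrite hy.
Qed.
End Pyth.

Lemma min_exists (P : nat -> Prop) n : P n -> exists k, P k /\ forall m, P m -> (k <= m)%N.
Proof.
elim: n {-2}n (leqnn n) => [|n IH] m lm Pm.
  by exists m; split=> // k _; move: lm; rewrite leqn0 => /eqP ->.
case: (classic (exists k, (k < m)%N /\ P k)) => [[k [km Pk]]|nk].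
  by apply: (IH k) => //; rewrite -ltnS (leq_trans km lm).
exists m; split=> // k Pk; rewrite leqNgt; apply/negP => km; apply: nk; by exists k.
Qed.

Lemma ext_min_some (P : nat -> Prop) k : ext_min P = Some k -> P k /\ (forall m, P m -> (k <= m)%N).
Proof.
rewrite /ext_min; case: excluded_middle_informative => // H [<-].
by case: constructive_indefinite_description.
Qed.

Lemma ext_min_eq (P : nat -> Prop) k : P k -> (forall m, P m -> (k <= m)%N) -> ext_min P = Some k.
Proof.
move=> Pk mk; rewrite /ext_min; case: excluded_middle_informative => [H|H]; last first.
  by exfalso; apply: H; exists k.
case: constructive_indefinite_description => k' /= [Pk' mk'].
by congr Some; apply/eqP; rewrite eqn_leq mk' // mk.
Qed.

Lemma ext_min_none (P : nat -> Prop) : ext_min P = None -> forall n, ~ P n.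
Proof.
move=> h n Pn; have [k [Pk mk]] := min_exists Pn.
by rewrite (ext_min_eq Pk mk) in h.
Qed.

Section Main.
Variable F : fieldType.
Hypothesis char2 : (2%:R : F) != 0.
Variable Pos : F -> Prop.
Hypothesis HP : is_ordering Pos.

Definition PP (p : nat) := (1 <= p)%N /\ forall x : F, sum_of_squares x -> sum_of_n_squares p x.
Definition Sset (d : nat) := exists q : seq F,
  [/\ nondeg q, anisotropic q, torsion q & size q = d].

Lemma notPP m : ~ PP m -> (1 <= m)%N -> exists x : F, sum_of_squares x /\ ~ sum_of_n_squares m x.
Proof.
move=> h m1; apply: NNPP => hn; apply: h; split=> // x sx.
by apply: NNPP => nx; apply: hn; exists x.
Qed.

Lemma sos0 n : sum_of_n_squares n (0 : F).
Proof.
exists (nseq n 0); rewrite size_nseq; split=> //; rewrite big_nseq expr0n /=.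
by elim: n => //= n <-; rewrite add0r.
Qed.

Lemma S_pf j (x : F) : sum_of_squares x -> ~ sum_of_n_squares (pw j) x -> Sset (pw j + pw j).
Proof.
move=> sx nx; have x0 : x != 0 by apply/eqP => e; apply: nx; rewrite e; apply: sos0.
exists (pf (pw j) x); split.
- exact: pf_nondeg.
- exact: (pf_aniso HP nx).
- exact: (pf_torsion HP j x0 sx).
- exact: pf_size.
Qed.

Lemma S0 : Sset 0.
Proof.
exists [::]; split=> //.
- by case=> x [x0 _]; move: x0; rewrite (thinmx0 x) eqxx.
- exists 1%N; split=> //; exists 0%N, 0%N; split=> //=; exists 1%:M; split.
    by rewrite unitmx1.
  by rewrite trmx1 mul1mx mulmx1.
Qed.

Lemma S_even d : Sset d -> ~~ odd d.
Proof. by case=> q [_ _ t <-]; apply: (torsion_even HP t). Qed.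

Lemma S_p1 d : PP 1 -> Sset d -> d = 0%N.
Proof.
move=> [_ pyt] [q [_ an [n [n0 [m1 [m2 h]]]]] <-].
have an' := pyth_nmul HP (n := n) pyt an.
have := F1 char2 an' h; rewrite (size_nmul n q) => /eqP; rewrite muln_eq0 => /orP [/eqP n00|/eqP //].
by rewrite n00 in n0.
Qed.

Lemma S_in d : (forall n, Sset n -> (n <= d)%N) ->
  (forall m, (forall n, Sset n -> (n <= m)%N) -> (d <= m)%N) -> Sset d.
Proof.
move=> ub mn; apply: NNPP => nd.
case: d ub mn nd => [|d] ub mn nd; first exact: nd S0.
have : (d.+1 <= d)%N; last by rewrite ltnn.
apply: mn => n Sn; have := ub n Sn; rewrite leq_eqVlt => /orP [/eqP e|] //.
by exfalso; apply: nd; rewrite -e.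
Qed.
End Main.

Lemma partA (F : fieldType) (char2 : (2%:R : F) != 0) (Pos : F -> Prop) (HP : is_ordering Pos) :
  in_N (pythagoras_number F) (u_invariant F).
Proof.
have PPE : pythagoras_number F = ext_min (@PP F) by [].
have UE : u_invariant F = ext_min (fun b => forall n, Sset F n -> (n <= b)%N) by [].
case Hp: (pythagoras_number F) => [p'|].
  have [[p1 PPp] minp] := ext_min_some Hp.
  case: (eqVneq p' 1%N) => [pe|pn1].
    left; split; first by rewrite pe.
    rewrite UE; apply: ext_min_eq => // n Sn.
    have P1 : PP F 1 by rewrite -pe.
    by rewrite (S_p1 char2 HP P1 Sn).
  have p2 : (2 <= p')%N by rewrite ltn_neqAle eq_sym pn1 p1.
  right; case Hu: (u_invariant F) => [d|]; last by right; split=> //; right; exists p'.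
  left; rewrite UE in Hu; have [UBd mind] := ext_min_some Hu.
  set j := trunc_log 2 p'.-1.
  have pm1 : (0 < p'.-1)%N by rewrite -ltnS prednK // ltnW.
  have h1 : (2 ^ j <= p'.-1)%N by apply: trunc_logP.
  have h2 : (p'.-1 < 2 ^ j.+1)%N by apply: trunc_log_ltn.
  have nPP : ~ PP F p'.-1.
    move=> h; have := minp _ h; rewrite -ltnS prednK ?ltnn //; exact: ltnW.
  have [x [sx nx]] := notPP nPP pm1.
  have nx' : ~ sum_of_n_squares (pw j) x.
    by move=> h; apply: nx; apply: sos_pad h; rewrite pwE.
  have Sj := S_pf HP sx nx'.
  have le := UBd _ Sj.
  have Sd := S_in UBd mind.
  have ev := S_even HP Sd.
  exists j.+1, d./2, p'; split=> //.
  - by congr Some; rewrite -[LHS](odd_double_half d) (negbTE ev) add0n -muln2 mulnC.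
  - have -> : (2 * d./2)%N = d by rewrite -[RHS](odd_double_half d) (negbTE ev) add0n -muln2 mulnC.
    by rewrite expnS mul2n -addnn -pwE.
  - by rewrite -(prednK (ltnW p2)).
right; right; split; last by left.
case Hu: (u_invariant F) => [d|] //; exfalso.
rewrite UE in Hu; have [UBd _] := ext_min_some Hu.
have noPP := ext_min_none Hp.
have pd : (1 <= pw d)%N by rewrite pwE expn_gt0.
have [x [sx nx]] := notPP (noPP (pw d)) pd.
have := UBd _ (S_pf HP sx nx).
rewrite pwE; apply/negP; rewrite -ltnNge.
apply: leq_trans (ltn_expl d (leqnn 2)) (leq_addr _ _).
Qed.

Lemma foldr_ones (F : fieldType) j : foldr (@tensor F) [:: 1] (nseq j [:: 1; 1]) = nseq (pw j) 1.
Proof. by elim: j => //= j ->; rewrite /tensor /= map_nseq mul1r cats0 -nseqD. Qed.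

Lemma partB (F : fieldType) (char2 : (2%:R : F) != 0) (Pos : F -> Prop) (HP : is_ordering Pos)
  (k : nat) : (1 <= k)%N -> Ikt_zero F k ->
  exists p, pythagoras_number F = Some p /\ (p <= 2 ^ k.-1)%N.
Proof.
move=> k1 Ik.
suff PPk : PP F (pw k.-1).
  have [m [Pm mm]] := min_exists PPk.
  exists m; split; first exact: (ext_min_eq Pm mm).
  by rewrite -pwE; apply: mm.
apply: NNPP => nP.
have pd : (1 <= pw k.-1)%N by rewrite pwE expn_gt0.
have [x [sx nx]] := notPP nP pd.
have x0 : x != 0 by apply/eqP => e; apply: nx; rewrite e; apply: sos0.
set j := k.-1 in nx pd.
set q := pf (pw j) x.
have Iq : in_Ik k q.
  exists [:: [:: 1; -x] :: nseq j [:: 1; 1]]; split.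
    move=> l; rewrite inE => /eqP ->; split; first by rewrite /= size_nseq prednK.
    move=> r; rewrite inE => /orP [/eqP ->|/nseqP [-> _]]; split=> //.
    - move=> a; rewrite !inE => /orP [/eqP ->|/eqP ->]; first exact: oner_neq0.
      by rewrite oppr_eq0.
    - by move=> a; rewrite !inE orbb => /eqP ->; exact: oner_neq0.
  exists 0%N, 0%N; rewrite /= foldr_ones /tensor /= !map_nseq mul1r mulr1 !cats0.
  split=> //; exists 1%:M; split; first by rewrite unitmx1.
  by rewrite trmx1 mul1mx mulmx1.
have := Ik q (pf_nondeg (N := pw j) x0) Iq (pf_torsion HP j x0 sx).
case=> m1 [m2 h].
have := F1 char2 (pf_aniso HP nx) h; rewrite pf_size.
by move: pd; case: (pw j).
Qed.

Unset Implicit Arguments.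
Close Scope ring_scope.

Theorem theorem2p4 (F : fieldType) (char2 : (2%:R : F)%R != 0%R)
  (realF : real_field F) :
  in_N (pythagoras_number F) (u_invariant F) /\
  (forall k : nat, (1 <= k)%N -> Ikt_zero F k ->
     exists p, pythagoras_number F = Some p /\ (p <= 2 ^ k.-1)%N).
Proof.
case: realF => Pos HP; split; first exact: (partA char2 HP).
by move=> k k1 Ik; apply: (partB char2 HP k1 Ik).
Qed.
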